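(* Let $d\ge2$, let $G$ be a closed germ, and let $s\in S_{\rm o}$. Then $s\in G$ if and only if the polar point $s^*$ lies on the boundary (relative to the hyperplane $H$) of the polar set $G^*$.
   Context: Fix an integer $d\ge 2$. $\langle\cdot,\cdot\rangle$ is the standard inner product on $\mathbb{R}^{d^2}$, $\|\cdot\|$ the Euclidean norm. $\Delta=\{p\in\mathbb{R}^{d^2}: p(i)\ge0,\ \sum_ip(i)=1\}$; $H=\{u\in\mathbb{R}^{d^2}:\sum_i u(i)=1\}$; $c=(1/d^2,\dots,1/d^2)$. For $A\subseteq H$ the polar is $A^*=\{u\in H:\langle u,v\rangle\ge\frac{1}{d(d+1)}\ \forall v\in A\}$. Radii: $r_{\rm o}^2=\frac{d-1}{d^2(d+1)}$, $r_{\rm i}^2=\frac{1}{d^2(d^2-1)}$. Out-sphere $S_{\rm o}=\{u\in H:\|u-c\|=r_{\rm o}\}$. For $s\in H$, $s\neq c$, the polar point of $s$ is $s^*=c-\frac{r_{\rm o}r_{\rm i}}{\|s-c\|^2}(s-c)$. A subset $A\subseteq\Delta$ is a germ if $\frac{1}{d(d+1)}\le\langle p,s\rangle\le\frac{2}{d(d+1)}$ for all $p,s\in A$. *)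

(* Defs.v *)
From Stdlib Require Import Reals.
From mathcomp Require Import all_boot.
Set Implicit Arguments. Unset Strict Implicit.

Local Open Scope R_scope.

Definition vec (d : nat) := 'I_(d * d) -> R.

Definition sumv (d : nat) (f : vec d) : R := \big[Rplus/0]_(i < d * d) f i.

Definition inner (d : nat) (u v : vec d) : R := sumv (fun i => u i * v i).

Definition vnorm (d : nat) (u : vec d) : R := sqrt (inner u u).

Definition vsub (d : nat) (u v : vec d) : vec d := fun i => u i - v i.

Definition Delta (d : nat) (p : vec d) : Prop :=
  (forall i, 0 <= p i) /\ sumv p = 1.

Definition Hyp (d : nat) (u : vec d) : Prop := sumv u = 1.

Definition cen (d : nat) : vec d := fun _ => 1 / (INR d ^ 2).

Definition polar (d : nat) (A : vec d -> Prop) (u : vec d) : Prop :=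
  Hyp u /\ forall v, A v -> 1 / (INR d * (INR d + 1)) <= inner u v.

Definition r_out (d : nat) : R :=
  sqrt ((INR d - 1) / (INR d ^ 2 * (INR d + 1))).

Definition r_in (d : nat) : R :=
  sqrt (1 / (INR d ^ 2 * (INR d ^ 2 - 1))).

Definition S_out (d : nat) (u : vec d) : Prop :=
  Hyp u /\ vnorm (vsub u (@cen d)) = r_out d.

Definition polar_point (d : nat) (s : vec d) : vec d :=
  fun i => @cen d i
           - (r_out d * r_in d / (vnorm (vsub s (@cen d))) ^ 2) * (s i - @cen d i).

Definition germ (d : nat) (A : vec d -> Prop) : Prop :=
  (forall p, A p -> Delta p) /\
  (forall p s, A p -> A s ->
     1 / (INR d * (INR d + 1)) <= inner p s <= 2 / (INR d * (INR d + 1))).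

Definition closed_vset (d : nat) (A : vec d -> Prop) : Prop :=
  forall x : vec d,
    (forall eps, 0 < eps -> exists y, A y /\ vnorm (vsub x y) < eps) -> A x.

Definition rel_boundary_H (d : nat) (B : vec d -> Prop) (x : vec d) : Prop :=
  Hyp x /\
  forall eps, 0 < eps ->
    (exists y, Hyp y /\ B y /\ vnorm (vsub x y) < eps) /\
    (exists z, Hyp z /\ ~ B z /\ vnorm (vsub x z) < eps).

(* Main.v *)
Require Import Defs.
From Stdlib Require Import Reals Lra Psatz Classical.
From mathcomp Require Import all_boot.
Local Open Scope R_scope.

Lemma sumv_ext d (f g : vec d) : (forall i, f i = g i) -> sumv f = sumv g.
Proof. intros H; unfold sumv; apply eq_bigr; intros i _; apply H. Qed.

Lemma sumv_lin2 d a b (f g : vec d) :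
  sumv (fun i => a * f i + b * g i) = a * sumv f + b * sumv g.
Proof.
unfold sumv.
elim/big_rec3: _ => [|i x y z _ ->]; ring.
Qed.

Lemma sumv_lin3 d a b c (f g h : vec d) :
  sumv (fun i => a * f i + b * g i + c * h i) = a * sumv f + b * sumv g + c * sumv h.
Proof.
rewrite -(sumv_lin2 _ a b f g).
replace (sumv (fun i => a * f i + b * g i)) with (1 * sumv (fun i => a * f i + b * g i)) by ring.
rewrite -(sumv_lin2 _ 1 c (fun i => a * f i + b * g i) h).
apply sumv_ext; intros; ring.
Qed.

Lemma sumv_const d k : sumv (fun _ : 'I_(d*d) => k) = INR (d*d) * k.
Proof.
unfold sumv; rewrite big_const_ord.
elim: (d*d)%nat => [|n IH] /=; [ring|].
rewrite IH; destruct n; simpl; ring.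
Qed.

Lemma sumv_nonneg d (f : vec d) : (forall i, 0 <= f i) -> 0 <= sumv f.
Proof. intros H; unfold sumv; apply big_ind; [lra|intros; lra|auto]. Qed.

Lemma inner_nonneg d (u : vec d) : 0 <= inner u u.
Proof. apply sumv_nonneg; intros; nra. Qed.

Lemma sumv_scale d a (f : vec d) : sumv (fun i => a * f i) = a * sumv f.
Proof.
rewrite -[a * sumv f]Rplus_0_r -[0 in RHS](Rmult_0_l (sumv f)) -sumv_lin2.
apply sumv_ext; intros; ring.
Qed.

Lemma inner_comm d (u v : vec d) : inner u v = inner v u.
Proof. apply sumv_ext; intros; ring. Qed.

Lemma sqrt_lt_sq x m : 0 <= x -> sqrt x < m -> x < m*m.
Proof.
intros Hx H. have Hs := sqrt_pos x. rewrite -(sqrt_sqrt x Hx). nra.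
Qed.

Lemma sq_le_sqrt x e : 0 <= x -> 0 <= e -> e <= sqrt x -> e*e <= x.
Proof.
intros Hx He H. rewrite -(sqrt_sqrt x Hx). nra.
Qed.

Lemma lt_sqrt x m : 0 <= x -> 0 < m -> x < m*m -> sqrt x < m.
Proof.
intros Hx Hm H. have Hs := sqrt_pos x. have Hq := sqrt_sqrt x Hx.
destruct (Rlt_or_le (sqrt x) m) as [h|h]; auto. nra.
Qed.

Theorem mainTheorem7 (d : nat) (hd : (2 <= d)%nat)
  (G : vec d -> Prop) (hG : germ G) (hGc : closed_vset G)
  (s : vec d) (hs : S_out s) :
  G s <-> rel_boundary_H (polar G) (polar_point s).
Proof.
have HD : 2 <= INR d.
{ change 2 with (INR 2). apply le_INR. apply/leP. exact hd. }
have Hdd : INR (d*d) = (INR d)*(INR d) by rewrite mult_INR.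
destruct hs as [Hs1 Hs2].
destruct hG as [HGd HGi].
have HD2 : (INR d)^2 = (INR d)*(INR d) by ring.
have Hro2 : r_out d * r_out d = ((INR d)-1)/((INR d)^2*((INR d)+1)).
{ unfold r_out; rewrite sqrt_sqrt; [reflexivity|].
  apply Rmult_le_pos; [lra|]. apply Rlt_le, Rinv_0_lt_compat. nra. }
have Hri2 : r_in d * r_in d = 1/((INR d)^2*((INR d)^2-1)).
{ unfold r_in; rewrite sqrt_sqrt; [reflexivity|].
  apply Rmult_le_pos; [lra|]. apply Rlt_le, Rinv_0_lt_compat. rewrite HD2. apply Rmult_lt_0_compat; nra. }
have Hro : 0 < r_out d.
{ unfold r_out; apply sqrt_lt_R0. apply Rmult_lt_0_compat; [lra|].
  apply Rinv_0_lt_compat. nra. }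
have Hri : 0 < r_in d.
{ unfold r_in; apply sqrt_lt_R0. apply Rmult_lt_0_compat; [lra|].
  apply Rinv_0_lt_compat. rewrite HD2. apply Rmult_lt_0_compat; nra. }
set ro := r_out d in Hro2 Hro Hs2 *.
set ri := r_in d in Hri2 Hri *.
have Hk : ro*ri = 1/((INR d)^2*((INR d)+1)).
{ apply Rsqr_inj; unfold Rsqr.
  - nra.
  - apply Rlt_le. apply Rmult_lt_0_compat; [lra|]. apply Rinv_0_lt_compat. nra.
  - replace (ro * ri * (ro * ri)) with ((ro*ro)*(ri*ri)) by ring.
    rewrite Hro2 Hri2. field. split; nra. }
have HA0 : inner (vsub s (@cen d)) (vsub s (@cen d)) = ro*ro.
{ unfold vnorm in Hs2. rewrite -Hs2 sqrt_sqrt //. apply inner_nonneg. }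
have Hcs : sumv (@cen d) = 1.
{ unfold cen; rewrite sumv_const Hdd; field; lra. }
have Hsc : inner s (@cen d) = 1/(INR d)^2.
{ unfold inner, cen;  rewrite (@sumv_ext _ _ (fun i => 1/(INR d)^2 * s i)).
  - rewrite sumv_scale Hs1; ring.
  - intros; ring. }
have Hcc : inner (@cen d) (@cen d) = 1/(INR d)^2.
{ unfold inner, cen; rewrite sumv_const Hdd; field; lra. }
have HA : inner s s = ro*ro + 1/(INR d)^2.
{ have E : inner (vsub s (@cen d)) (vsub s (@cen d)) = inner s s - 2 * inner s (@cen d) + inner (@cen d) (@cen d).
  { unfold inner at 1.
    rewrite (@sumv_ext _ _ (fun i => 1 * (s i * s i) + (-2) * (s i * @cen d i) + 1 * (@cen d i * @cen d i))).
    - rewrite sumv_lin3. unfold inner. ring.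
    - intros; unfold vsub; ring. }
  lra. }
set lam := ro * ri / vnorm (vsub s (@cen d)) ^ 2.
have Hlam : lam * (ro*ro) = ro*ri.
{ unfold lam; rewrite Hs2; field; lra. }
have Hlam0 : 0 < lam.
{ unfold lam; rewrite Hs2. apply Rmult_lt_0_compat; [nra|]. apply Rinv_0_lt_compat; nra. }
have Hrel : 1/(INR d^2) - ro*ri = 1/(INR d * (INR d + 1)).
{ rewrite Hk. field; lra. }
have Hrel2 : 2/(INR d * (INR d + 1)) = ro*ro + 1/(INR d^2).
{ rewrite Hro2. field; lra. }
have Hpv : forall v : vec d, inner (polar_point s) v = (1+lam) * inner (@cen d) v - lam * inner s v.
{ intros v. unfold inner at 1.
  rewrite (@sumv_ext _ _ (fun i => (1+lam) * (@cen d i * v i) + (-lam) * (s i * v i))).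
  - rewrite sumv_lin2. unfold inner. ring.
  - intros; unfold polar_point; fold ro ri lam; ring. }
have Hcv : forall v : vec d, sumv v = 1 -> inner (@cen d) v = 1/INR d^2.
{ intros v Hv. unfold inner, cen.
  rewrite sumv_scale Hv; ring. }
have Hsv : forall v : vec d, inner (vsub s v) (vsub s v) = inner s s - 2 * inner s v + inner v v.
{ intros v. unfold inner at 1.
  rewrite (@sumv_ext _ _ (fun i => 1 * (s i * s i) + (-2) * (s i * v i) + 1 * (v i * v i))).
  - rewrite sumv_lin3. unfold inner. ring.
  - intros; unfold vsub; ring. }
have KEY : forall v, G v ->
  1/(INR d * (INR d + 1)) + lam * inner (vsub s v) (vsub s v) / 2 <= inner (polar_point s) v.
{ intros v Gv. have [_ Hv1] := HGd v Gv. have [_ HC] := HGi v v Gv Gv.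
  rewrite Hpv (Hcv v Hv1) Hsv HA. rewrite Hrel2 in HC. rewrite -Hrel -Hlam.
  have : lam * inner v v <= lam * (ro * ro + 1 / INR d ^ 2) by apply Rmult_le_compat_l; lra.
  lra. }
have Hpol : polar G (polar_point s).
{ split.
  - unfold Hyp. rewrite (@sumv_ext _ _ (fun i => (1+lam) * @cen d i + (-lam) * s i)).
    + rewrite sumv_lin2 Hcs Hs1. ring.
    + intros; unfold polar_point; fold ro ri lam; ring.
  - intros v Gv. have := KEY v Gv. have := inner_nonneg _ (vsub s v). nra. }
have HCle : forall v, G v -> inner v v <= 1.
{ intros v Gv. have [_ HC] := HGi v v Gv Gv.
  have : 2 / (INR d * (INR d + 1)) <= 1.
  { apply (Rmult_le_reg_r (INR d * (INR d + 1))); [nra|].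
    field_simplify; [nra|nra]. }
  lra. }
split.
- intros Gs. split; [exact (proj1 Hpol)|]. intros eps Heps. split.
  + exists (polar_point s). split; [exact (proj1 Hpol)|]. split; [exact Hpol|].
    apply lt_sqrt; [apply inner_nonneg|exact Heps|].
    unfold inner; rewrite (@sumv_ext _ _ (fun _ => 0)).
    * rewrite sumv_const. nra.
    * intros; unfold vsub; ring.
  + set del := eps / (2 * ro).
    have Hdel : 0 < del by unfold del; apply Rmult_lt_0_compat; [lra|apply Rinv_0_lt_compat; lra].
    exists (fun i => @cen d i - (lam + del) * (s i - @cen d i)). split; [|split].
    * unfold Hyp. rewrite (@sumv_ext _ _ (fun i => (1+lam+del) * @cen d i + (-(lam+del)) * s i)).
      -- rewrite sumv_lin2 Hcs Hs1. ring.
      -- intros; ring.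
    * intros [_ Hz]. have := Hz s Gs.
      unfold inner at 1.
      rewrite (@sumv_ext _ _ (fun i => (1+lam+del) * (@cen d i * s i) + (-(lam+del)) * (s i * s i))).
      -- rewrite sumv_lin2 -/(inner (@cen d) s) -/(inner s s) inner_comm Hsc HA.
         have : 0 < del * (ro * ro) by apply Rmult_lt_0_compat; [exact Hdel|apply Rmult_lt_0_compat; exact Hro].
         rewrite -Hrel -Hlam. intros; nra.
      -- intros; ring.
    * apply lt_sqrt; [apply inner_nonneg|exact Heps|].
      unfold inner; rewrite (@sumv_ext _ _ (fun i => (del*del) * (vsub s (@cen d) i * vsub s (@cen d) i))).
      -- rewrite sumv_scale.
         change (sumv _) with (inner (vsub s (@cen d)) (vsub s (@cen d))).
         rewrite HA0. unfold del.
         replace (eps / (2 * ro) * (eps / (2 * ro)) * (ro * ro)) with (eps*eps/4) by (field; lra).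
         nra.
      -- intros; unfold vsub, polar_point; fold ro ri lam; ring.
- intros [_ Hb]. apply NNPP; intros nGs.
  destruct (classic (exists eps, 0 < eps /\ forall y, G y -> eps <= vnorm (vsub s y)))
    as [[eps [Heps Hfar]]|Hno].
  2:{ apply nGs, hGc. intros eps Heps. apply NNPP; intro Hn. apply Hno. exists eps.
      split; [exact Heps|]. intros y Gy. apply Rnot_lt_le. intro Hl. apply Hn. exists y; auto. }
  set m := lam * (eps * eps) / 2.
  have Hm : 0 < m by unfold m; apply Rmult_lt_0_compat; [apply Rmult_lt_0_compat; [exact Hlam0| apply Rmult_lt_0_compat; exact Heps] | lra].
  destruct (Hb m Hm) as [_ [z [Hz [nz Hdz]]]].
  apply nz. split; [exact Hz|]. intros v Gv.
  have HK := KEY v Gv.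
  have HE : eps * eps <= inner (vsub s v) (vsub s v).
  { apply sq_le_sqrt; [apply inner_nonneg|lra|]. exact (Hfar v Gv). }
  set w := vsub (polar_point s) z.
  have HW : inner w w < m * m by apply sqrt_lt_sq; [apply inner_nonneg|exact Hdz].
  have Hzv : inner z v = inner (polar_point s) v - inner w v.
  { unfold inner at 1.
    rewrite (@sumv_ext _ _ (fun i => 1 * (polar_point s i * v i) + (-1) * (w i * v i))).
    - rewrite sumv_lin2. unfold inner. ring.
    - intros; unfold w, vsub; ring. }
  have Hexp : inner (fun i => w i - m * v i) (fun i => w i - m * v i)
              = inner w w - 2 * m * inner w v + (m * m) * inner v v.
  { unfold inner at 1.
    rewrite (@sumv_ext _ _ (fun i => 1 * (w i * w i) + (-2 * m) * (w i * v i) + (m*m) * (v i * v i))).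
    - rewrite sumv_lin3. unfold inner. ring.
    - intros; ring. }
  have H0 := inner_nonneg _ (fun i => w i - m * v i).
  have HC := HCle v Gv.
  have Hwv : inner w v <= m.
  { have X1 : m * m * inner v v <= m * m * 1 by apply Rmult_le_compat_l; nra.
    rewrite Hexp in H0.
    have X2 : 2 * m * inner w v <= 2 * m * m by lra.
    apply (Rmult_le_reg_l (2*m)); lra. }
  have X3 : lam * (eps * eps) <= lam * inner (vsub s v) (vsub s v) by apply Rmult_le_compat_l; lra.
  rewrite Hzv. unfold m in *. lra.
Qed.
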